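(* Let $\langle A,\to\rangle$ be a conditional algebra and $Y$ a closed subset of the Stone space $\mathrm{Ul}(A)$. Then $\theta(Y)=\{(a,b)\in A^2: Y\cap\varphi(a)=Y\cap\varphi(b)\}$ is a congruence of $\langle A,\to\rangle$ if and only if $Y$ is a $T_A$-closed set.
   Context: A conditional algebra is $\langle A,\to\rangle$ with $A$ a Boolean algebra and $\to$ binary with $a\to1=1$, $(a\to b)\wedge(a\to c)=a\to(b\wedge c)$, $(a\vee b)\to c\le(a\to c)\wedge(b\to c)$. $\mathrm{Ul}(A)$ is the Stone space of ultrafilters, $\varphi(a)=\{u:a\in u\}$; closed sets are $\varphi(F)=\{u:F\subseteq u\}$ for filters $F$ (including $F=A$). $D^{\to}_u(F)=\{b:\exists a\in F,\ a\to b\in u\}$; $T_A(u,Z,v)$ iff there is a filter $F$ with $Z=\varphi(F)$ and $D^{\to}_u(F)\subseteq v$. For $x,y\in\mathrm{Ul}(A)$, $\mathbf{C}(x,y)$ is the set of closed $Z$ with $T_A(x,Z,y)$. A closed set $Y$ is $T_A$-closed if for all $x,y$: if $x\in Y$ and $Z$ is a minimal element (w.r.t. inclusion) of $\mathbf{C}(x,y)$, then $Z\subseteq Y$ and $y\in Y$. *)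

(* Defs.v *)
(* Boolean algebras as complemented distributive lattices
   with top and bottom (ctbDistrLatticeType). *)
From HB Require Import structures.
From mathcomp Require Import all_boot all_order.
Set Implicit Arguments. Unset Strict Implicit. Unset Printing Implicit Defensive.
Import Order.TTheory.
Local Open Scope order_scope.

Section CondAlg.
Context {disp : Order.disp_t} {A : ctbDistrLatticeType disp}.

Definition conditional_algebra (imp : A -> A -> A) : Prop :=
  [/\ forall a, imp a \top = \top,
      forall a b c, imp a b `&` imp a c = imp a (b `&` c)
    & forall a b c, imp (a `|` b) c <= imp a c `&` imp b c].

(* Filters (the improper filter F = A is allowed). *)
Definition is_filter (F : A -> Prop) : Prop :=
  [/\ F \top,
      forall a b, F a -> a <= b -> F b
    & forall a b, F a -> F b -> F (a `&` b)].

Definition proper_filter (F : A -> Prop) : Prop := is_filter F /\ ~ F \bot.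

Definition ultrafilter (u : A -> Prop) : Prop :=
  proper_filter u /\
  forall G : A -> Prop, proper_filter G -> (forall a, u a -> G a) ->
    forall a, G a -> u a.

Definition Ul : Type := {u : A -> Prop | ultrafilter u}.

Definition Uset := Ul -> Prop.

Definition subU (X Y : Uset) : Prop := forall u, X u -> Y u.
Definition eqU (X Y : Uset) : Prop := forall u, X u <-> Y u.

Definition phi (a : A) : Uset := fun u => proj1_sig u a.
Definition phiF (F : A -> Prop) : Uset :=
  fun u => forall a, F a -> proj1_sig u a.

Definition closedU (Z : Uset) : Prop :=
  exists F, is_filter F /\ eqU Z (phiF F).

Definition Dimp (imp : A -> A -> A) (u : Ul) (F : A -> Prop) : A -> Prop :=
  fun b => exists2 a, F a & proj1_sig u (imp a b).

Definition TA (imp : A -> A -> A) (u : Ul) (Z : Uset) (v : Ul) : Prop :=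
  exists F, [/\ is_filter F, eqU Z (phiF F)
              & forall b, Dimp imp u F b -> proj1_sig v b].

Definition Cset (imp : A -> A -> A) (x y : Ul) (Z : Uset) : Prop :=
  closedU Z /\ TA imp x Z y.

Definition minimal_C (imp : A -> A -> A) (x y : Ul) (Z : Uset) : Prop :=
  Cset imp x y Z /\
  forall Z', Cset imp x y Z' -> subU Z' Z -> eqU Z' Z.

Definition TA_closed (imp : A -> A -> A) (Y : Uset) : Prop :=
  closedU Y /\
  forall (x y : Ul) (Z : Uset), Y x -> minimal_C imp x y Z ->
    subU Z Y /\ Y y.

Definition theta (Y : Uset) (a b : A) : Prop :=
  eqU (fun u => Y u /\ phi a u) (fun u => Y u /\ phi b u).

(* Congruence of <A, imp>: an equivalence relation compatible with the
   Boolean operations (meet, join, complement; constants trivially) and imp. *)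
Definition congruence (imp : A -> A -> A) (R : A -> A -> Prop) : Prop :=
  (forall a, R a a) /\
  (forall a b, R a b -> R b a) /\
  (forall a b c, R a b -> R b c -> R a c) /\
  (forall a b c d, R a b -> R c d -> R (a `&` c) (b `&` d)) /\
  (forall a b c d, R a b -> R c d -> R (a `|` c) (b `|` d)) /\
  (forall a b, R a b -> R (~` a) (~` b)) /\
  (forall a b c d, R a b -> R c d -> R (imp a c) (imp b d)).

End CondAlg.

(* Main.v *)
Require Import Defs.
From mathcomp Require Import all_boot all_order.
From mathcomp Require Import boolp classical_sets.
From Stdlib Require Import Classical.
Import Order.Theory.
Set Implicit Arguments. Unset Strict Implicit.

Section Zorn_wrap.
Variable T : Type.

Lemma zorn_chain (Q : (T -> Prop) -> Prop) (X0 : T -> Prop) :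
  Q X0 -> (forall X, Q X -> exists t, X t) ->
  (forall C : (T -> Prop) -> Prop, (forall X, C X -> Q X) ->
     (forall X Y, C X -> C Y -> (forall t, X t -> Y t) \/ (forall t, Y t -> X t)) ->
     (exists X, C X) -> Q (fun t => exists2 X, C X & X t)) ->
  exists M, Q M /\ forall N, Q N -> (forall t, M t -> N t) -> forall t, N t -> M t.
Proof.
move=> QX0 Qne Qch.
pose P := fun X : T -> Prop => (forall t, ~ X t) \/ Q X.
have [|M [PM Mmax]] := @Zorn_bigcup T P.
  move=> F FP tot.
  case: (classic (exists X, F X /\ Q X)) => [[X1 [FX1 QX1]]|nQ].
    right.
    have -> : (\bigcup_(X in F) X)%classic = (fun t => exists2 X, (F X /\ Q X) & X t).
      apply: funext => t; apply: propext; split.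
        case=> X FX Xt; exists X => //; split => //.
        by case: (FP X FX) => [/(_ t)|//].
      by case=> X [FX _] Xt; exists X.
    apply: Qch.
    - by move=> X [].
    - by move=> X Y [FX _] [FY _]; exact: tot.
    - by exists X1.
  left => t [X FX Xt].
  case: (FP X FX) => [/(_ t)//|QX]; apply: nQ; by exists X.
have QM : Q M.
  case: PM => // Mempty.
  have [t X0t] := Qne _ QX0.
  exfalso; apply: (Mmax X0); last by right.
  split; first by move=> s /Mempty.
  by move=> /(_ t X0t) /Mempty.
exists M; split => // N QN MN t Nt.
case: (classic (forall s, N s -> M s)) => [H|H]; first exact: H.
by exfalso; apply: (Mmax N); [split | right].
Qed.
End Zorn_wrap.

Local Open Scope order_scope.

Section Helpers.
Context {disp : Order.disp_t} {A : ctbDistrLatticeType disp}.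

Definition upf (c : A) : A -> Prop := fun e => c <= e.
Definition joinf (F G : A -> Prop) : A -> Prop :=
  fun e => exists f g, [/\ F f, G g & f `&` g <= e].

Lemma upf_filter c : is_filter (upf c).
Proof.
split; rewrite /upf.
- exact: lex1.
- by move=> a b ca ab; exact: le_trans ab.
- by move=> a b ca cb; rewrite lexI ca cb.
Qed.

Lemma joinf_filter F G : is_filter F -> is_filter G -> is_filter (joinf F G).
Proof.
move=> [FT Fup FI] [GT Gup GI]; split.
- by exists \top, \top; split => //; exact: lex1.
- move=> a b [f [g [Ff Gg le]]] ab; exists f, g; split => //; exact: le_trans ab.
- move=> a b [f1 [g1 [Ff1 Gg1 le1]]] [f2 [g2 [Ff2 Gg2 le2]]].
  exists (f1 `&` f2), (g1 `&` g2); split; [exact: FI|exact: GI|].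
  rewrite lexI; apply/andP; split.
    apply: le_trans le1; apply: leI2; exact: leIl.
  apply: le_trans le2; apply: leI2; exact: leIr.
Qed.

Lemma joinf_l F G a : is_filter G -> F a -> joinf F G a.
Proof. by move=> [GT _ _] Fa; exists a, \top; split => //; exact: leIl. Qed.

Lemma joinf_r F G a : is_filter F -> G a -> joinf F G a.
Proof. by move=> [FT _ _] Ga; exists \top, a; split => //; exact: leIr. Qed.

Lemma le_bot_compl (f a : A) : f `&` ~` a <= \bot -> f <= a.
Proof. by rewrite lex0 disj_leC complK. Qed.

Lemma chain_filter (C : (A -> Prop) -> Prop) :
  (forall X, C X -> is_filter X) ->
  (forall X Y, C X -> C Y -> (forall t, X t -> Y t) \/ (forall t, Y t -> X t)) ->
  (exists X, C X) -> is_filter (fun t => exists2 X, C X & X t).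
Proof.
move=> Cf tot [X0 CX0]; split.
- by exists X0 => //; case: (Cf _ CX0).
- move=> a b [X CX Xa] ab; exists X => //; case: (Cf _ CX) => _ up _; exact: up ab.
- move=> a b [X CX Xa] [Y CY Yb].
  case: (tot X Y CX CY) => [XY|YX].
    exists Y => //; case: (Cf _ CY) => _ _ I; apply: I => //; exact: XY.
  exists X => //; case: (Cf _ CX) => _ _ I; apply: I => //; exact: YX.
Qed.

Section Ultra.
Variable u : @Ul disp A.
Local Notation U := (proj1_sig u).

Lemma uT : U \top. Proof. by case: (proj2_sig u) => [[[]]]. Qed.
Lemma uup a b : U a -> a <= b -> U b.
Proof. by case: (proj2_sig u) => [[[_ up _] _] _]; exact: up. Qed.
Lemma uI a b : U a -> U b -> U (a `&` b).
Proof. by case: (proj2_sig u) => [[[_ _ I] _] _]; exact: I. Qed.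
Lemma unbot : ~ U \bot.
Proof. by case: (proj2_sig u) => [[_ nb] _]. Qed.
Lemma uIE a b : U (a `&` b) <-> U a /\ U b.
Proof.
split; last by case; exact: uI.
move=> h; split; [exact: (uup h (leIl _ _))|exact: (uup h (leIr _ _))].
Qed.
Lemma unotboth a : U a -> U (~` a) -> False.
Proof. by move=> h1 h2; apply: unbot; rewrite -(meetxC a); exact: uI. Qed.

Lemma ucompl a : ~ U a -> U (~` a).
Proof.
move=> nUa.
case: (proj2_sig u) => [[uf _] umax].
have Gf : is_filter (joinf U (upf (~` a))) by apply: joinf_filter => //; exact: upf_filter.
apply: (umax (joinf U (upf (~` a)))).
- split => // [[f [g [Uf hg le]]]].
  apply: nUa. apply: (uup Uf). apply: le_bot_compl.
  by apply: le_trans le; apply: leI2 => //.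
- by move=> b Ub; apply: joinf_l => //; exact: upf_filter.
- by apply: joinf_r => //; rewrite /upf.
Qed.

Lemma uCE a : U (~` a) <-> ~ U a.
Proof. by split; [move=> h1 h2; exact: unotboth h2 h1|exact: ucompl]. Qed.

Lemma uUE a b : U (a `|` b) <-> U a \/ U b.
Proof.
split; last by case=> h; apply: (uup h); [exact: leUl|exact: leUr].
move=> h; case: (classic (U a)) => ha; first by left.
case: (classic (U b)) => hb; first by right.
exfalso; apply: (unotboth h); rewrite complU; apply: uI; exact: ucompl.
Qed.
End Ultra.

Lemma ultra_ext (F : A -> Prop) : proper_filter F -> exists u : @Ul disp A, forall a, F a -> proj1_sig u a.
Proof.
move=> PF.
have [|M [[PM FM] Mmax]] := @zorn_chain A (fun X => proper_filter X /\ forall a, F a -> X a) F (conj PF (fun a h => h))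
  (fun X '(conj (conj (And3 XT _ _) _) _) => ex_intro _ \top XT).
  move=> C CQ tot [X0 CX0]; split; last first.
    by move=> a Fa; exists X0 => //; case: (CQ _ CX0) => _; apply.
  split.
    apply: chain_filter => //; last by exists X0.
    by move=> X /CQ [[]].
  by case=> X CX Xb; case: (CQ _ CX) => [[_ nb] _].
have uM : ultrafilter M.
  split => // G PG MG; apply: Mmax => //; split => // a Fa; apply: MG; exact: FM.
by exists (exist _ M uM).
Qed.

Lemma phiF_sub (F F' : A -> Prop) : is_filter F -> is_filter F' ->
  subU (phiF F') (phiF F) -> forall a, F a -> F' a.
Proof.
move=> hF hF' sub a Fa; apply: NNPP => nF'a.
have Hf : is_filter (joinf F' (upf (~` a))) by apply: joinf_filter => //; exact: upf_filter.
have [u hu] : exists u : @Ul disp A, forall e, joinf F' (upf (~` a)) e -> proj1_sig u e.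
  apply: ultra_ext; split => // [[f [g [F'f hg le]]]].
  apply: nF'a; case: hF' => _ up _; apply: (up f a F'f); apply: le_bot_compl.
  by apply: le_trans le; apply: leI2.
have ua : proj1_sig u a.
  apply: (sub u) => // e F'e; apply: hu; apply: joinf_l => //; exact: upf_filter.
apply: (unotboth ua); apply: hu; apply: joinf_r => //; by rewrite /upf.
Qed.

Lemma phi_sub (F : A -> Prop) (a : A) : is_filter F -> subU (phiF F) (phi a) -> F a.
Proof.
move=> hF sub; apply: (phiF_sub (upf_filter a) hF) => [u hu e ae|]; last by rewrite /upf.
exact: (uup (sub u hu) ae).
Qed.

Section Imp.
Variable imp : A -> A -> A.
Hypothesis hc : conditional_algebra imp.

Lemma imp_mono a b c : b <= c -> imp a b <= imp a c.
Proof.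
case: hc => _ h2 _ bc.
by rewrite -(meet_l bc) -h2; exact: leIr.
Qed.

Lemma imp_anti a a' c : a <= a' -> imp a' c <= imp a c.
Proof.
case: hc => _ _ h3 aa'.
by have := h3 a a' c; rewrite (join_r aa') lexI => /andP[].
Qed.

Lemma Dimp_filter (x : @Ul disp A) (F : A -> Prop) : is_filter F -> is_filter (Dimp imp x F).
Proof.
case: hc => h1 h2 _ [FT Fup FI]; split.
- by exists \top => //; rewrite h1; exact: uT.
- move=> a b [c Fc xc] ab; exists c => //; apply: (uup xc); exact: imp_mono.
- move=> a b [c Fc xc] [d Fd xd]; exists (c `&` d); first exact: FI.
  rewrite -h2; apply: uI; apply: uup; [exact: xc| exact: imp_anti (leIl _ _)|
    exact: xd | exact: imp_anti (leIr _ _)].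
Qed.

Lemma max_filter (x y : @Ul disp A) (b : A) :
  (forall e, Dimp imp x (upf b) e -> proj1_sig y e) ->
  exists M, [/\ is_filter M, M b, (forall e, Dimp imp x M e -> proj1_sig y e)
   & forall N, is_filter N -> N b -> (forall e, Dimp imp x N e -> proj1_sig y e) ->
       (forall t, M t -> N t) -> forall t, N t -> M t].
Proof.
move=> hb.
have [|M [[fM Mb DM] Mmax]] := @zorn_chain A
  (fun X => [/\ is_filter X, X b & forall e, Dimp imp x X e -> proj1_sig y e])
  (upf b) (And3 (upf_filter b) (lexx b) hb)
  (fun X '(And3 (And3 XT _ _) _ _) => ex_intro _ \top XT).
  move=> C CQ tot [X0 CX0]; split.
  - apply: chain_filter => //; last by exists X0.
    by move=> X /CQ [].
  - by exists X0 => //; case: (CQ _ CX0).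
  - move=> e [a [X CX Xa] xa]; case: (CQ _ CX) => _ _; apply; by exists a.
exists M; split => // N fN Nb DN; exact: Mmax.
Qed.

Lemma key (Y : @Uset disp A) (x : @Ul disp A) (b c : A) :
  TA_closed imp Y -> Y x -> ~ proj1_sig x (imp b c) ->
  exists y M, [/\ is_filter M, M b, (forall e, Dimp imp x M e -> proj1_sig y e),
     ~ proj1_sig y c & subU (phiF M) Y /\ Y y].
Proof.
move=> [_ TAc] Yx nx.
have Df := Dimp_filter x (upf_filter b).
have Hf : is_filter (joinf (Dimp imp x (upf b)) (upf (~` c))).
  by apply: joinf_filter => //; exact: upf_filter.
have PH : proper_filter (joinf (Dimp imp x (upf b)) (upf (~` c))).
  split => // -[f [g [[a ba xa] hg le]]].
  apply: nx; apply: (uup xa); apply: le_trans (imp_anti _ ba) _; apply: imp_mono.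
  apply: le_bot_compl; apply: le_trans le; exact: leI2.
have [y hy] := ultra_ext PH.
have yD : forall e, Dimp imp x (upf b) e -> proj1_sig y e.
  by move=> e he; apply: hy; apply: joinf_l => //; exact: upf_filter.
have ync : ~ proj1_sig y c.
  by move=> yc; apply: (unotboth yc); apply: hy; apply: joinf_r => //; rewrite /upf.
have [M [fM Mb DM Mmax]] := max_filter yD.
have minZ : minimal_C imp x y (phiF M).
  split.
    split; first by exists M; split.
    by exists M; split.
  move=> Z' [_ [F' [fF' eqZ' DF']]] sub.
  have MF' := phiF_sub fM fF' (fun u h => sub u ((proj2 (eqZ' u)) h)).
  have F'M := Mmax F' fF' (MF' _ Mb) DF' MF'.
  move=> u; rewrite eqZ'; split => h e he; apply: h; [exact: MF'|exact: F'M].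
have [subZ Yy] := TAc x y _ Yx minZ.
by exists y, M; split => //; split.
Qed.

End Imp.
End Helpers.

Theorem theorem8p3 (disp : Order.disp_t) (A : ctbDistrLatticeType disp)
  (imp : A -> A -> A) (Y : @Uset disp A) :
  conditional_algebra imp -> closedU Y ->
  (congruence imp (theta Y) <-> TA_closed imp Y).
Proof.
move=> hc cY; split.
- case=> _ [_ [_ [_ [_ [_ himp]]]]].
  have [G [fG eqY]] := cY.
  split => // x y Z Yx [[_ [F [fF eqZ DF]]] minZ].
  have thG : forall g, G g -> forall a, theta Y a (a `&` g).
    move=> g Gg a u; split => -[Yu h]; split => //.
      apply: uI => //; exact: (proj1 (eqY u) Yu).
    by apply: (uup h); exact: leIl.
  have threfl : forall a, theta Y a a by move=> a u.
  split.
  + pose F' := joinf F G.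
    have fF' : is_filter F' by exact: joinf_filter.
    have C' : Cset imp x y (phiF F').
      split; first by exists F'.
      exists F'; split => // e [a [f [g [Ff Gg le]]] xa].
      have xfg : proj1_sig x (imp (f `&` g) e) by apply: (uup xa); exact: imp_anti.
      have := himp _ _ _ _ (thG g Gg f) (threfl e) x.
      move=> [_ /(_ (conj Yx xfg)) [_ xf]].
      by apply: DF; exists f.
    have sub : subU (phiF F') Z.
      move=> u hu; apply/eqZ => f Ff; apply: hu; apply: joinf_l => //; by case: fG.
    move=> u Zu; have := proj2 (minZ _ C' sub u) Zu => hu.
    apply/eqY => g Gg; apply: hu; apply: joinf_r => //.
  + apply/eqY => g Gg; apply: DF; exists \top; first by case: fF.
    have th : theta Y \top g.
      move=> u; split => -[Yu _]; split => //; first exact: (proj1 (eqY u) Yu).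
      exact: uT.
    have := himp _ _ _ _ (threfl \top) th x.
    case: (hc) => h1 _ _; rewrite h1.
    by move=> [/(_ (conj Yx (uT x))) [_]].
- move=> TAc.
  have sym : forall a b, theta Y a b -> theta Y b a by move=> a b h u; split => /h.
  have trans : forall a b c, theta Y a b -> theta Y b c -> theta Y a c.
    by move=> a b c h1 h2 u; split => [/h1/h2|/h2/h1].
  have L1 : forall a b c, theta Y a b -> theta Y (imp a c) (imp b c).
    suff H : forall a b c, theta Y a b -> forall u, Y u -> phi (imp a c) u -> phi (imp b c) u.
      by move=> a b c h u; split => -[Yu hu]; split => //; [exact: (H a b c h u Yu hu)|exact: (H b a c (sym _ _ h) u Yu hu)].
    move=> a b c h x Yx xa; apply: NNPP => nb.
    have [y [M [fM Mb DM ync [subM Yy]]]] := key hc TAc Yx nb.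
    apply: ync; apply: DM; exists a => //.
    apply: phi_sub fM _ => u hu.
    have [_ ua] := proj2 (h u) (conj (subM u hu) (hu b Mb)); exact: ua.
  have L2 : forall b c d, theta Y c d -> theta Y (imp b c) (imp b d).
    suff H : forall b c d, theta Y c d -> forall u, Y u -> phi (imp b c) u -> phi (imp b d) u.
      by move=> b c d h u; split => -[Yu hu]; split => //; [exact: (H b c d h u Yu hu)|exact: (H b d c (sym _ _ h) u Yu hu)].
    move=> b c d h x Yx xc; apply: NNPP => nd.
    have [y [M [fM Mb DM ynd [subM Yy]]]] := key hc TAc Yx nd.
    apply: ynd.
    have yc : proj1_sig y c by apply: DM; exists b.
    by have [_ ] := proj1 (h y) (conj Yy yc).
  split; first by move=> a u.
  split; first exact: sym.
  split; first exact: trans.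
  split.
    move=> a b c e h1 h2 u; rewrite /phi !uIE; split => -[Yu [ha hc']].
      by split => //; split; [case: (h1 u) => /(_ (conj Yu ha)) []|case: (h2 u) => /(_ (conj Yu hc')) []].
    by split => //; split; [case: (h1 u) => _ /(_ (conj Yu ha)) []|case: (h2 u) => _ /(_ (conj Yu hc')) []].
  split.
    move=> a b c e h1 h2 u; rewrite /phi !uUE; split => -[Yu [ha|hc']]; split => //.
    - by left; case: (h1 u) => /(_ (conj Yu ha)) [].
    - by right; case: (h2 u) => /(_ (conj Yu hc')) [].
    - by left; case: (h1 u) => _ /(_ (conj Yu ha)) [].
    - by right; case: (h2 u) => _ /(_ (conj Yu hc')) [].
  split.
    move=> a b h u; rewrite /phi !uCE; split => -[Yu hn]; split => // hb; apply: hn.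
      by case: (h u) => _ /(_ (conj Yu hb)) [].
    by case: (h u) => /(_ (conj Yu hb)) [].
  move=> a b c d h1 h2; apply: trans (L1 _ _ _ h1) (L2 _ _ _ h2).
Qed.
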